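(* Let $n\ge 1$, let $\rho\in\mathbb{R}$, and let $H_n$ be the $(2n+1)$-dimensional Heisenberg group with left-invariant frame $e_1,\dots,e_{2n+1}$ as described in the context, $N=2n+1$. Let $g_0$ be a left-invariant metric on $H_n$ which is diagonal in this frame, and let $g(t)$ be a solution of the Ricci–Bourguignon flow $\frac{\partial}{\partial t}g(t)=-2\,\mathrm{Ric}(g(t))+2\rho R(g(t))g(t)$, $g(0)=g_0$, by left-invariant metrics diagonal in this frame, with components $g_I(t)=g(t)(e_I,e_I)$. Then: (a) $\frac{d}{dt}\frac{g_i(t)}{g_{i+n}(t)}=0$ for $1\le i\le n$; (b) $\frac{d}{dt}\Big(g_1(t)\cdots g_n(t)\,g_N(t)^{\frac{1-n\rho}{1+\rho}}\Big)=\frac{d}{dt}\Big(g_{1+n}(t)\cdots g_{2n}(t)\,g_N(t)^{\frac{1-n\rho}{1+\rho}}\Big)=0$; (c) if $\rho<0$ and $G_N(t)=\int_0^t g_N(r)\,dr$, then $\lim_{t\to+\infty}G_N(t)=+\infty$; (d) if moreover $g_i(0)g_{n+i}(0)=g_1(0)g_{1+n}(0)$ for all $1\le i\le n$, then the solution has the form $g_j(t)=g_j(0)(1+bt)^{\frac{1-n\rho}{n+2-n\rho}}$ for $1\le j\le 2n$, and $g_N(t)=g_N(0)(1+bt)^{\frac{n+n\rho}{n\rho-n-2}}$, where $b=(n+2-n\rho)\frac{g_N(0)}{g_1(0)g_{1+n}(0)}$.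
   Context: The Heisenberg group $H_n$ is $\mathbb{R}^{2n+1}$ with coordinates $(x,y,z)$, $x=(x^1,\dots,x^n)$, $y=(x^{n+1},\dots,x^{2n})$, $z=x^{2n+1}$, and product $(x,y,z)\circ(x',y',z')=(x+x',y+y',z+z'+x\cdot y')$, where $x\cdot y'$ is the Euclidean inner product. The left-invariant vector fields $e_i=\partial_i$, $e_{n+i}=\partial_{n+i}+x^i\partial_{2n+1}$ ($1\le i\le n$), $e_{2n+1}=\partial_{2n+1}$ form a frame whose only nonzero brackets are $[e_i,e_{n+i}]=e_{2n+1}$, $1\le i\le n$. A left-invariant metric $g$ is diagonal if $g(e_I,e_J)=0$ for $I\neq J$; write $g_I=g(e_I,e_I)$. $\mathrm{Ric}$ denotes the Ricci tensor and $R$ the scalar curvature. For diagonal left-invariant metrics the Ricci tensor is diagonal in this frame, with $\mathrm{Ric}(e_i,e_i)=-\frac{g_N}{2g_{n+i}}$, $\mathrm{Ric}(e_{n+i},e_{n+i})=-\frac{g_N}{2g_i}$, $\mathrm{Ric}(e_N,e_N)=\frac12 g_N^2\Sigma$, $R=-\frac12 g_N\Sigma$, where $\Sigma=\sum_{k=1}^n\frac{1}{g_kg_{n+k}}$; thus the flow is the ODE system $g_i'=\frac{g_N}{g_{i+n}}-\rho g_ig_N\Sigma$, $g_{i+n}'=\frac{g_N}{g_i}-\rho g_{i+n}g_N\Sigma$, $g_N'=-(1+\rho)g_N^2\Sigma$. In part (c) the solution is understood to be defined for all $t\ge 0$; in part (d) the formula is understood for $t$ with $1+bt>0$ (and $n+2-n\rho\ne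 0$). *)

(* Defs.v *)
From Stdlib Require Import Reals Lra Lia.
From Coquelicot Require Import Coquelicot.
Open Scope R_scope.

(* A diagonal left-invariant metric on H_n along a path is encoded by its
   components g I t = g(t)(e_I, e_I), for indices I = 1, ..., 2n+1 (N = 2n+1).
   Indices outside 1..2n+1 are irrelevant. *)

Definition idxN (n : nat) : nat := (2 * n + 1)%nat.

Definition Sigma (n : nat) (g : nat -> R -> R) (t : R) : R :=
  sum_f_R0 (fun k => / (g (S k) t * g (S k + n)%nat t)) (n - 1).

Definition RicD (n : nat) (g : nat -> R -> R) (t : R) (I : nat) : R :=
  if (I <=? n)%nat then - g (idxN n) t / (2 * g (I + n)%nat t)
  else if (I <=? 2 * n)%nat then - g (idxN n) t / (2 * g (I - n)%nat t)
  else / 2 * (g (idxN n) t) ^ 2 * Sigma n g t.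

Definition Scal (n : nat) (g : nat -> R -> R) (t : R) : R :=
  - / 2 * g (idxN n) t * Sigma n g t.

(* g is a solution on [0, T) of the Ricci–Bourguignon flow
     d/dt g = -2 Ric(g) + 2 rho R(g) g
   by diagonal left-invariant (positive definite) metrics:
   components positive on [0,T), differentiable on (0,T) satisfying the flow,
   and right-continuous at t = 0 (so that g(0) is the initial metric). *)
Definition RB_diag_solution (n : nat) (rho : R) (g : nat -> R -> R) (T : Rbar) : Prop :=
  (forall I t, (1 <= I <= idxN n)%nat -> 0 <= t -> Rbar_lt (Finite t) T -> 0 < g I t) /\
  (forall I t, (1 <= I <= idxN n)%nat -> 0 < t -> Rbar_lt (Finite t) T ->
      is_derive (g I) t (-2 * RicD n g t I + 2 * rho * Scal n g t * g I t)) /\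
  (forall I, (1 <= I <= idxN n)%nat ->
      filterlim (g I) (at_right 0) (locally (g I 0))).

(* Main.v *)
Require Import Defs.
From Stdlib Require Import Reals Lra Lia.
From Coquelicot Require Import Coquelicot.
Open Scope R_scope.

Lemma deq (f : R -> R) (x l l' : R) : is_derive f x l -> l = l' -> is_derive f x l'.
Proof. intros H ->; exact H. Qed.

Definition rc (f : R -> R) := filterlim f (at_right 0) (locally (f 0)).

Lemma cont_rc f : continuous f 0 -> rc f.
Proof.
  intros H. unfold rc. eapply filterlim_filter_le_1; [|exact H].
  apply filter_le_within.
Qed.

Lemma der_cont (f : R -> R) (x l : R) : is_derive f x l -> continuous f x.
Proof. intros H; apply (@ex_derive_continuous R_AbsRing R_NormedModule); eexists; exact H. Qed.

Lemma rc_mult f h : rc f -> rc h -> rc (fun s => f s * h s).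
Proof.
  intros Hf Hh. unfold rc.
  apply (filterlim_comp_2 f h Rmult Hf Hh).
  apply (@filterlim_mult R_AbsRing (f 0) (h 0)).
Qed.

Lemma rc_plus f h : rc f -> rc h -> rc (fun s => f s + h s).
Proof.
  intros Hf Hh. unfold rc.
  apply (filterlim_comp_2 f h Rplus Hf Hh).
  apply (@filterlim_plus R_AbsRing R_NormedModule (f 0) (h 0)).
Qed.

Lemma rc_comp f (phi : R -> R) : rc f -> continuous phi (f 0) -> rc (fun s => phi (f s)).
Proof.
  intros Hf Hp. unfold rc. eapply filterlim_comp; [exact Hf| exact Hp].
Qed.

Lemma rc_const c : rc (fun _ => c).
Proof. unfold rc. apply filterlim_const. Qed.

Lemma rc_prod (F : nat -> R -> R) m :
  (forall k, (k <= m)%nat -> rc (F k)) -> rc (fun s => prod_f_R0 (fun k => F k s) m).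
Proof.
  induction m; intros H.
  - simpl. apply H. lia.
  - simpl. apply rc_mult. apply IHm. intros; apply H; lia. apply H; lia.
Qed.

Lemma prod_pos (F : nat -> R) m : (forall k, (k <= m)%nat -> 0 < F k) -> 0 < prod_f_R0 F m.
Proof.
  induction m; intros H; simpl. apply H; lia.
  apply Rmult_lt_0_compat. apply IHm; intros; apply H; lia. apply H; lia.
Qed.

Lemma sum_pos (F : nat -> R) m : (forall k, (k <= m)%nat -> 0 < F k) -> 0 < sum_f_R0 F m.
Proof.
  induction m; intros H; simpl. apply H; lia.
  apply Rplus_lt_0_compat. apply IHm; intros; apply H; lia. apply H; lia.
Qed.

Lemma prod_deriv (F : nat -> R -> R) (h : nat -> R) t m :
  (forall k, (k <= m)%nat -> is_derive (F k) t (F k t * h k)) ->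
  is_derive (fun s => prod_f_R0 (fun k => F k s) m) t
     (prod_f_R0 (fun k => F k t) m * sum_f_R0 h m).
Proof.
  induction m; intros H; simpl.
  - apply H; lia.
  - eapply deq. apply (@is_derive_mult R_AbsRing).
    apply IHm; intros; apply H; lia. apply H; lia.
    intros; apply Rmult_comm.
    simpl. unfold plus, mult; simpl. ring.
Qed.

Lemma sum_lin (u : nat -> R) a c m :
  sum_f_R0 (fun k => a * u k - c) m = a * sum_f_R0 u m - c * INR (S m).
Proof.
  induction m; simpl. ring.
  rewrite IHm. destruct m; simpl; ring.
Qed.

Lemma mono f df a b : a <= b -> (forall s, a <= s <= b -> is_derive f s (df s)) ->
  (forall s, a <= s <= b -> 0 <= df s) -> f a <= f b.
Proof.
  intros Hab Hd Hp.
  destruct (MVT_gen f a b df) as [c [Hc E]].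
  - intros x Hx. rewrite Rmin_left, Rmax_right in Hx by lra. apply Hd; lra.
  - intros x Hx. rewrite Rmin_left, Rmax_right in Hx by lra.
    apply continuity_pt_filterlim. apply (der_cont _ _ (df x)). apply Hd; lra.
  - rewrite Rmin_left, Rmax_right in Hc by lra.
    assert (0 <= df c) by (apply Hp; lra). nra.
Qed.

Lemma const_right f t : 0 < t -> (forall s, 0 < s <= t -> is_derive f s 0) -> rc f -> f t = f 0.
Proof.
  intros Ht Hd Hrc.
  assert (E : forall e, 0 < e < t -> f e = f t).
  { intros e He. destruct (MVT_gen f e t (fun _ => 0)) as [c [Hc E]].
    - intros x Hx. rewrite Rmin_left, Rmax_right in Hx by lra. apply Hd; lra.
    - intros x Hx. rewrite Rmin_left, Rmax_right in Hx by lra.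
      apply continuity_pt_filterlim. apply (der_cont _ _ 0). apply Hd; lra.
    - lra. }
  symmetry. eapply (filterlim_locally_unique (F := at_right 0) f). exact Hrc.
  eapply filterlim_ext_loc; [| apply (filterlim_const (f t))].
  exists (mkposreal t Ht). intros y Hy Hy0. simpl in Hy.
  unfold ball in Hy; simpl in Hy; unfold AbsRing_ball, abs, minus, plus, opp in Hy; simpl in Hy.
  symmetry; apply E. split; [lra|]. apply Rabs_lt_between in Hy. lra.
Qed.

Lemma rc_ex_RInt (f : R -> R) (b : R) : 0 < b -> (forall s, 0 < s <= b -> continuous f s) -> rc f -> ex_RInt f 0 b.
Proof.
  intros Hb Hc Hrc.
  set (h := fun s => if Rle_dec s 0 then f 0 else f s).
  apply (ex_RInt_ext h).
  { intros x Hx. rewrite Rmin_left, Rmax_right in Hx by lra. unfold h.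
    destruct (Rle_dec x 0); [lra|reflexivity]. }
  apply (@ex_RInt_continuous R_CompleteNormedModule). intros z Hz. rewrite Rmin_left, Rmax_right in Hz by lra.
  destruct (Req_dec z 0) as [->|Hz0].
  - unfold continuous. apply filterlim_locally. intros eps.
    apply (proj1 (filterlim_locally f (f 0))) with (eps := eps) in Hrc.
    unfold at_right, within in Hrc.
    eapply filter_imp; [|exact Hrc]. intros x Hx.
    unfold h. destruct (Rle_dec 0 0); [|lra].
    destruct (Rle_dec x 0). apply ball_center. apply Hx. lra.
  - apply (continuous_ext_loc (U := R_UniformSpace) h f).
    + exists (mkposreal z ltac:(lra)). intros y Hy. simpl in Hy.
      unfold ball in Hy; simpl in Hy; unfold AbsRing_ball, abs, minus, plus, opp in Hy; simpl in Hy.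
      apply Rabs_lt_between in Hy. unfold h. destruct (Rle_dec y 0); [lra|reflexivity].
    + apply Hc. lra.
Qed.
Lemma lt_T (s t : R) (T : Rbar) : s <= t -> Rbar_lt t T -> Rbar_lt s T.
Proof. destruct T; simpl; lra. Qed.

Lemma gpos n rho g T I t : RB_diag_solution n rho g T -> (1 <= I <= idxN n)%nat -> 0 <= t -> Rbar_lt t T -> 0 < g I t.
Proof. intros [H _] HI Ht HT. apply H; auto. Qed.

Lemma der_low n rho g T i t : RB_diag_solution n rho g T -> (1 <= i <= n)%nat -> 0 < t -> Rbar_lt t T ->
  is_derive (g i) t (g i t * (g (idxN n) t / (g i t * g (i+n)%nat t) - rho * (g (idxN n) t * Sigma n g t))).
Proof.
  intros Hs Hi Ht HT.
  assert (P1 : 0 < g i t) by (eapply gpos; eauto; unfold idxN; lia || lra).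
  assert (P2 : 0 < g (i+n)%nat t) by (eapply gpos; eauto; unfold idxN; lia || lra).
  destruct Hs as [_ [Hd _]]. eapply deq. apply Hd; auto. unfold idxN; lia.
  unfold RicD, Scal. replace (i <=? n)%nat with true by (symmetry; apply Nat.leb_le; lia).
  field. lra.
Qed.

Lemma der_high n rho g T i t : RB_diag_solution n rho g T -> (1 <= i <= n)%nat -> 0 < t -> Rbar_lt t T ->
  is_derive (g (i+n)%nat) t (g (i+n)%nat t * (g (idxN n) t / (g i t * g (i+n)%nat t) - rho * (g (idxN n) t * Sigma n g t))).
Proof.
  intros Hs Hi Ht HT.
  assert (P1 : 0 < g i t) by (eapply gpos; eauto; unfold idxN; lia || lra).
  assert (P2 : 0 < g (i+n)%nat t) by (eapply gpos; eauto; unfold idxN; lia || lra).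
  destruct Hs as [_ [Hd _]]. eapply deq. apply Hd; auto. unfold idxN; lia.
  unfold RicD, Scal. replace (i + n <=? n)%nat with false by (symmetry; apply Nat.leb_gt; lia).
  replace (i + n <=? 2 * n)%nat with true by (symmetry; apply Nat.leb_le; lia).
  replace (i + n - n)%nat with i by lia.
  field. lra.
Qed.

Lemma der_N n rho g T t : RB_diag_solution n rho g T -> (1 <= n)%nat -> 0 < t -> Rbar_lt t T ->
  is_derive (g (idxN n)) t (g (idxN n) t * (- (1 + rho) * (g (idxN n) t * Sigma n g t))).
Proof.
  intros Hs Hi Ht HT.
  destruct Hs as [_ [Hd _]]. eapply deq. apply Hd; auto. unfold idxN; lia.
  unfold RicD, Scal. replace (idxN n <=? n)%nat with false by (symmetry; apply Nat.leb_gt; unfold idxN; lia).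
  replace (idxN n <=? 2 * n)%nat with false by (symmetry; apply Nat.leb_gt; unfold idxN; lia).
  field.
Qed.
Lemma ln_deriv (f : R -> R) x df : 0 < f x -> is_derive f x df ->
  is_derive (fun s => ln (f s)) x (df / f x).
Proof.
  intros Hp Hd. eapply deq. apply (is_derive_comp ln f). apply is_derive_ln; auto. exact Hd.
  unfold scal; simpl; unfold mult; simpl. field. lra.
Qed.

Lemma exp_deriv (f : R -> R) x df : is_derive f x df ->
  is_derive (fun s => exp (f s)) x (exp (f x) * df).
Proof.
  intros Hd. eapply deq. apply (is_derive_comp exp f). apply is_derive_exp. exact Hd.
  unfold scal; simpl; unfold mult; simpl. ring.
Qed.

Lemma rp_deriv (f : R -> R) x df a : 0 < f x -> is_derive f x df ->
  is_derive (fun s => Rpower (f s) a) x (Rpower (f x) a * (a * (df / f x))).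
Proof.
  intros Hp Hd. unfold Rpower. apply (exp_deriv (fun s => a * ln (f s))).
  eapply deq. apply (is_derive_scal (fun s => ln (f s))). apply ln_deriv; [exact Hp|exact Hd].
  reflexivity.
Qed.

Lemma mul_deriv (f h : R -> R) x df dh : is_derive f x df -> is_derive h x dh ->
  is_derive (fun s => f s * h s) x (df * h x + f x * dh).
Proof.
  intros A B. eapply deq. apply (@is_derive_mult R_AbsRing); eauto. intros; apply Rmult_comm.
  reflexivity.
Qed.

Lemma plus_deriv (f h : R -> R) x df dh : is_derive f x df -> is_derive h x dh ->
  is_derive (fun s => f s + h s) x (df + dh).
Proof.
  intros A B. apply (@is_derive_plus R_AbsRing R_NormedModule f h); eauto.
Qed.

Lemma scal_deriv (f : R -> R) c x df : is_derive f x df ->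
  is_derive (fun s => c * f s) x (c * df).
Proof.
  intros A. apply is_derive_scal; eauto.
Qed.

Lemma id_deriv x : is_derive (fun s : R => s) x 1.
Proof. apply (@is_derive_id R_AbsRing x). Qed.

Lemma const_deriv c x : is_derive (fun _ : R => c) x 0.
Proof. apply (@is_derive_const R_AbsRing R_NormedModule c x). Qed.

Lemma part_a n rho g T i t : RB_diag_solution n rho g T -> (1 <= i <= n)%nat -> 0 < t -> Rbar_lt t T ->
  is_derive (fun s => g i s / g (i + n)%nat s) t 0.
Proof.
  intros Hs Hi Ht HT.
  assert (P1 : 0 < g i t) by (eapply gpos; eauto; unfold idxN; lia || lra).
  assert (P2 : 0 < g (i+n)%nat t) by (eapply gpos; eauto; unfold idxN; lia || lra).
  eapply deq. apply is_derive_div. eapply der_low; eauto. eapply der_high; eauto. lra.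
  field. lra.
Qed.

Lemma sum_h n (g : nat -> R -> R) t gN rho : (1 <= n)%nat ->
  sum_f_R0 (fun k => gN / (g (S k) t * g (S k + n)%nat t) - rho * (gN * Sigma n g t)) (n-1)
  = (1 - INR n * rho) * (gN * Sigma n g t).
Proof.
  intros Hn.
  rewrite (sum_eq _ (fun k => gN * (/ (g (S k) t * g (S k + n)%nat t)) - rho * (gN * Sigma n g t))).
  2:{ intros; unfold Rdiv; reflexivity. }
  rewrite sum_lin. replace (S (n-1)) with n by lia. unfold Sigma. ring.
Qed.

Lemma Pi1_deriv n rho g T t : RB_diag_solution n rho g T -> (1 <= n)%nat -> 0 < t -> Rbar_lt t T ->
  is_derive (fun s => prod_f_R0 (fun k => g (S k) s) (n - 1)) t
    (prod_f_R0 (fun k => g (S k) t) (n - 1) * ((1 - INR n * rho) * (g (idxN n) t * Sigma n g t))).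
Proof.
  intros Hs Hn Ht HT. rewrite <- (sum_h n g t (g (idxN n) t) rho Hn).
  apply (prod_deriv (fun k => g (S k))). intros k Hk.
  apply (der_low n rho g T (S k) t); auto. lia.
Qed.

Lemma Pi2_deriv n rho g T t : RB_diag_solution n rho g T -> (1 <= n)%nat -> 0 < t -> Rbar_lt t T ->
  is_derive (fun s => prod_f_R0 (fun k => g (S k + n)%nat s) (n - 1)) t
    (prod_f_R0 (fun k => g (S k + n)%nat t) (n - 1) * ((1 - INR n * rho) * (g (idxN n) t * Sigma n g t))).
Proof.
  intros Hs Hn Ht HT. rewrite <- (sum_h n g t (g (idxN n) t) rho Hn).
  apply (prod_deriv (fun k => g (S k + n)%nat)). intros k Hk.
  apply (der_high n rho g T (S k) t); auto. lia.
Qed.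

Lemma part_b_gen n rho g T t (Pi : R -> R) : RB_diag_solution n rho g T -> (1 <= n)%nat -> 0 < t -> Rbar_lt t T ->
  1 + rho <> 0 ->
  is_derive Pi t (Pi t * ((1 - INR n * rho) * (g (idxN n) t * Sigma n g t))) ->
  is_derive (fun s => Pi s * Rpower (g (idxN n) s) ((1 - INR n * rho) / (1 + rho))) t 0.
Proof.
  intros Hs Hn Ht HT Hr HP.
  assert (PN : 0 < g (idxN n) t) by (eapply gpos; eauto; unfold idxN; lia || lra).
  eapply deq. apply mul_deriv. exact HP. apply rp_deriv. exact PN. eapply der_N; eauto.
  cbv beta. field. split; lra.
Qed.

Lemma Sigma_pos n g t T rho : RB_diag_solution n rho g T -> (1 <= n)%nat -> 0 <= t -> Rbar_lt t T -> 0 < Sigma n g t.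
Proof.
  intros Hs Hn Ht HT. unfold Sigma. apply sum_pos. intros k Hk.
  apply Rinv_0_lt_compat. apply Rmult_lt_0_compat; eapply gpos; eauto; unfold idxN; lia.
Qed.

Lemma P_deriv n rho g T k t : RB_diag_solution n rho g T -> (1 <= n)%nat -> (k <= n - 1)%nat -> 0 < t -> Rbar_lt t T ->
  is_derive (fun s => g (S k) s * g (S k + n)%nat s) t
   (2 * g (idxN n) t - 2 * rho * (g (S k) t * g (S k + n)%nat t) * (g (idxN n) t * Sigma n g t)).
Proof.
  intros Hs Hn Hk Ht HT.
  assert (P1 : 0 < g (S k) t) by (eapply gpos; eauto; unfold idxN; lia || lra).
  assert (P2 : 0 < g (S k + n)%nat t) by (eapply gpos; eauto; unfold idxN; lia || lra).
  eapply deq. apply mul_deriv.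
  apply (der_low n rho g T (S k) t); auto; lia.
  apply (der_high n rho g T (S k) t); auto; lia.
  field. lra.
Qed.

Lemma part_c n rho g : RB_diag_solution n rho g p_infty -> (1 <= n)%nat -> rho < 0 ->
  is_lim (fun t => RInt (g (idxN n)) 0 t) p_infty p_infty.
Proof.
  intros Hs Hn Hr.
  set (gN := g (idxN n)).
  assert (HN : (1 <= idxN n <= idxN n)%nat) by (unfold idxN; lia).
  assert (gNp : forall s, 0 <= s -> 0 < gN s) by (intros; eapply gpos; eauto; exact I).
  assert (Sp : forall s, 0 <= s -> 0 < Sigma n g s) by (intros; eapply Sigma_pos; eauto; exact I).
  assert (Pm : forall k s, (k <= n - 1)%nat -> 1 <= s ->
     g (S k) 1 * g (S k + n)%nat 1 <= g (S k) s * g (S k + n)%nat s).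
  { intros k s Hk H1.
    apply (mono (fun s => g (S k) s * g (S k + n)%nat s)
      (fun s => 2 * g (idxN n) s - 2 * rho * (g (S k) s * g (S k + n)%nat s) * (g (idxN n) s * Sigma n g s))).
    lra. intros x Hx. apply P_deriv with (T := p_infty); auto. lra. exact I.
    intros x Hx.
    assert (0 < g (S k) x) by (eapply gpos; eauto; [unfold idxN; lia | lra | exact I]).
    assert (0 < g (S k + n)%nat x) by (eapply gpos; eauto; [unfold idxN; lia | lra | exact I]).
    assert (0 < gN x) by (apply gNp; lra). assert (0 < Sigma n g x) by (apply Sp; lra).
    fold gN.
    assert (0 < (g (S k) x * g (S k + n)%nat x) * (gN x * Sigma n g x)) by
      (apply Rmult_lt_0_compat; apply Rmult_lt_0_compat; auto).
    nra. }
  assert (Sm : forall s, 1 <= s -> Sigma n g s <= Sigma n g 1).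
  { intros s Hs1. unfold Sigma. apply sum_Rle. intros k Hk. apply Rinv_le_contravar.
    apply Rmult_lt_0_compat; eapply gpos; eauto; try (unfold idxN; lia); try lra; exact I.
    apply Pm; auto. }
  set (c := Rabs (1 + rho) * Sigma n g 1 + 1).
  assert (Hc : 0 < c).
  { unfold c. assert (0 <= Rabs (1+rho)) by apply Rabs_pos. assert (0 < Sigma n g 1) by (apply Sp; lra). nra. }
  set (u1 := / gN 1).
  assert (Hu1 : 0 < u1) by (unfold u1; apply Rinv_0_lt_compat; apply gNp; lra).
  assert (Lb : forall s, 1 <= s -> / (u1 + c * (s - 1)) <= gN s).
  { intros s Hs1.
    assert (V : c * 1 - / gN 1 <= c * s - / gN s).
    { apply (mono (fun s => c * s - / gN s) (fun s => c - (1 + rho) * Sigma n g s)). lra.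
      intros x Hx. assert (0 < gN x) by (apply gNp; lra).
      eapply deq. apply (plus_deriv (fun s => c * s) (fun s => - / gN s)).
      eapply deq. apply scal_deriv. apply id_deriv. reflexivity.
      apply (@is_derive_opp R_AbsRing R_NormedModule (fun s => / gN s)).
      apply is_derive_inv. apply der_N with (T := p_infty) (rho := rho); auto. lra. exact I. lra.
      cbv beta. unfold opp; simpl. fold gN. field. lra.
      intros x Hx. assert (0 < Sigma n g x) by (apply Sp; lra).
      assert (Sigma n g x <= Sigma n g 1) by (apply Sm; lra).
      assert ((1 + rho) * Sigma n g x <= Rabs (1 + rho) * Sigma n g x).
      { apply Rmult_le_compat_r. lra. apply Rle_abs. }
      assert (Rabs (1 + rho) * Sigma n g x <= Rabs (1 + rho) * Sigma n g 1).
      { apply Rmult_le_compat_l. apply Rabs_pos. auto. }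
      unfold c. lra. }
    assert (0 < gN s) by (apply gNp; lra).
    rewrite <- (Rinv_inv (gN s)). apply Rinv_le_contravar. apply Rinv_0_lt_compat; lra.
    unfold u1. lra. }
  assert (I01 : ex_RInt gN 0 1).
  { apply rc_ex_RInt. lra. intros s Hs1. apply (der_cont _ _ _ (der_N n rho g p_infty s Hs Hn ltac:(lra) I)).
    destruct Hs as [_ [_ H3]]. apply H3; auto. }
  assert (R01 : 0 <= RInt gN 0 1).
  { apply RInt_ge_0; auto. lra. intros; apply Rlt_le, gNp; lra. }
  set (F := fun s => ln (u1 + c * (s - 1)) / c).
  set (f := fun s => / (u1 + c * (s - 1))).
  assert (IF : forall t, 1 <= t -> is_RInt f 1 t (F t - F 1)).
  { intros t Ht. apply (@is_RInt_derive R_CompleteNormedModule F f).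
    - intros x Hx. rewrite Rmin_left, Rmax_right in Hx by lra. unfold F, f.
      assert (0 <= c*(x-1)) by (apply Rmult_le_pos; lra). auto_derive. lra. field. split; lra.
    - intros x Hx. rewrite Rmin_left, Rmax_right in Hx by lra. unfold f.
      assert (0 <= c*(x-1)) by (apply Rmult_le_pos; lra). apply (@ex_derive_continuous R_AbsRing R_NormedModule). auto_derive. lra. }
  apply is_lim_spec. intros M. simpl.
  set (E := exp (c * M + ln u1)).
  assert (HE : 0 < E) by apply exp_pos.
  exists (Rmax 1 (1 + E / c)). intros t Ht.
  assert (Ht1 : 1 < t) by (eapply Rle_lt_trans; [apply Rmax_l|exact Ht]).
  assert (Ht2 : 1 + E / c < t) by (eapply Rle_lt_trans; [apply Rmax_r|exact Ht]).
  assert (I1t : ex_RInt gN 1 t).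
  { apply (@ex_RInt_continuous R_CompleteNormedModule). intros z Hz. rewrite Rmin_left, Rmax_right in Hz by lra.
    apply (der_cont _ _ _ (der_N n rho g p_infty z Hs Hn ltac:(lra) I)). }
  rewrite <- (RInt_Chasles gN 0 1 t I01 I1t). unfold plus; simpl.
  assert (Le : RInt f 1 t <= RInt gN 1 t).
  { apply RInt_le; auto. lra. eexists; apply IF; lra. intros x Hx; apply Lb; lra. }
  rewrite (is_RInt_unique _ _ _ _ (IF t ltac:(lra))) in Le.
  assert (K : M < F t - F 1).
  { unfold F. replace (1 - 1) with 0 by ring. rewrite Rmult_0_r, Rplus_0_r.
    assert (c * (t - 1) > E).
    { apply (Rmult_lt_compat_l c) in Ht2; auto. field_simplify in Ht2; lra. }
    assert (ln E < ln (u1 + c * (t - 1))) by (apply ln_increasing; lra).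
    unfold E in H0. rewrite ln_exp in H0.
    apply (Rmult_lt_reg_l c); auto. field_simplify; lra. }
  lra.
Qed.

Lemma minus_deriv (f h : R -> R) x df dh : is_derive f x df -> is_derive h x dh ->
  is_derive (fun s => f s - h s) x (df - dh).
Proof.
  intros A B. apply (plus_deriv f (fun s => - h s)). auto.
  apply (@is_derive_opp R_AbsRing R_NormedModule h). auto.
Qed.

Lemma rc_minus f h : rc f -> rc h -> rc (fun s => f s - h s).
Proof.
  intros A B. apply (rc_plus f (fun s => - h s)). auto.
  apply (rc_comp h Ropp). auto. apply (der_cont _ _ (-1)).
  eapply deq. apply (@is_derive_opp R_AbsRing R_NormedModule (fun y => y)). apply id_deriv. reflexivity.
Qed.

Lemma rc_scal c f : rc f -> rc (fun s => c * f s).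
Proof. intros A. apply (rc_mult (fun _ => c) f). apply rc_const. auto. Qed.

Lemma rc_inv f : rc f -> f 0 <> 0 -> rc (fun s => / f s).
Proof.
  intros A B. apply (rc_comp f Rinv). auto. apply (der_cont _ _ (- 1 / (f 0) ^ 2)).
  apply (is_derive_inv (fun y => y)). apply id_deriv. auto.
Qed.

Lemma rc_ln f : rc f -> 0 < f 0 -> rc (fun s => ln (f s)).
Proof.
  intros A B. apply (rc_comp f ln). auto. apply (der_cont _ _ (/ f 0)). apply is_derive_ln. auto.
Qed.

Lemma rc_exp f : rc f -> rc (fun s => exp (f s)).
Proof.
  intros A. apply (rc_comp f exp). auto. apply (der_cont _ _ (exp (f 0))). apply is_derive_exp.
Qed.

Lemma P_deriv2 n rho g T k t : RB_diag_solution n rho g T -> (1 <= k <= n)%nat -> 0 < t -> Rbar_lt t T ->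
  is_derive (fun s => g k s * g (k + n)%nat s) t
   (2 * g (idxN n) t - 2 * rho * (g k t * g (k + n)%nat t) * (g (idxN n) t * Sigma n g t)).
Proof.
  intros Hs Hk Ht HT.
  assert (P1 : 0 < g k t) by (eapply gpos; eauto; unfold idxN; lia || lra).
  assert (P2 : 0 < g (k + n)%nat t) by (eapply gpos; eauto; unfold idxN; lia || lra).
  eapply deq. apply mul_deriv.
  apply (der_low n rho g T k t); auto.
  apply (der_high n rho g T k t); auto.
  field. lra.
Qed.

Lemma rc_g n rho g T I : RB_diag_solution n rho g T -> (1 <= I <= idxN n)%nat -> rc (g I).
Proof. intros [_ [_ H]] HI. apply H; auto. Qed.

Lemma Peq n rho g T : RB_diag_solution n rho g T -> (1 <= n)%nat -> Rbar_lt 0 T ->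
  (forall i, (1 <= i <= n)%nat -> g i 0 * g (n + i)%nat 0 = g 1%nat 0 * g (1 + n)%nat 0) ->
  forall k s, (1 <= k <= n)%nat -> 0 < s -> Rbar_lt s T ->
   g k s * g (k + n)%nat s = g 1%nat s * g (1 + n)%nat s.
Proof.
  intros Hs Hn H0T H0 k s Hk Hs0 HsT.
  set (gN := g (idxN n)).
  set (Pi1 := fun s => prod_f_R0 (fun k => g (S k) s) (n - 1)).
  set (Pi2 := fun s => prod_f_R0 (fun k => g (S k + n)%nat s) (n - 1)).
  set (c1 := / (2 * (INR n + 1))). set (c2 := INR n / (INR n + 1)).
  set (A := fun s => c1 * (ln (Pi1 s) + ln (Pi2 s)) - c2 * ln (gN s)).
  set (F := fun s => (g k s * g (k + n)%nat s - g 1%nat s * g (1 + n)%nat s) * exp (2 * rho * A s)).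
  assert (Hn1 : 0 < INR n + 1) by (pose proof (pos_INR n); lra).
  assert (Pp : forall x, 0 <= x -> Rbar_lt x T -> 0 < Pi1 x /\ 0 < Pi2 x /\ 0 < gN x).
  { intros x Hx HxT. split; [|split].
    - apply prod_pos. intros; eapply gpos; eauto; unfold idxN; lia.
    - apply prod_pos. intros; eapply gpos; eauto; unfold idxN; lia.
    - eapply gpos; eauto; unfold idxN; lia. }
  assert (E : F s = F 0).
  { apply const_right; auto.
    - intros x Hx. assert (HxT : Rbar_lt x T) by (eapply lt_T; [|exact HsT]; lra).
      destruct (Pp x ltac:(lra) HxT) as [p1 [p2 p3]].
      eapply deq. unfold F. apply mul_deriv.
      apply minus_deriv. apply (P_deriv2 n rho g T k x Hs Hk ltac:(lra) HxT).
      apply (P_deriv2 n rho g T 1 x Hs ltac:(lia) ltac:(lra) HxT).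
      apply exp_deriv. apply scal_deriv. unfold A. apply minus_deriv. apply scal_deriv.
      apply plus_deriv. apply ln_deriv. auto. apply (Pi1_deriv n rho g T x Hs Hn ltac:(lra) HxT).
      apply ln_deriv. auto. apply (Pi2_deriv n rho g T x Hs Hn ltac:(lra) HxT).
      apply scal_deriv. apply ln_deriv. auto. apply (der_N n rho g T x Hs Hn ltac:(lra) HxT).
      cbv beta. fold gN. fold (Pi1 x). fold (Pi2 x). unfold c1, c2. set (e := exp _). set (S := Sigma n g x). clearbody e S A Pi1 Pi2 gN. field. repeat split; lra.
    - unfold F. apply rc_mult. apply rc_minus; apply rc_mult; eapply rc_g; eauto; unfold idxN; lia.
      apply rc_exp. apply rc_scal. unfold A. apply rc_minus. apply rc_scal. apply rc_plus.
      apply rc_ln. apply rc_prod. intros; eapply rc_g; eauto; unfold idxN; lia. apply (Pp 0); auto; lra.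
      apply rc_ln. apply (rc_prod (fun k => g (S k + n)%nat)). intros; eapply rc_g; eauto; unfold idxN; lia. apply (Pp 0); auto; lra.
      apply rc_scal. apply rc_ln. eapply rc_g; eauto; unfold idxN; lia. apply (Pp 0); auto; lra. }
  unfold F at 2 in E. rewrite Nat.add_comm, H0 in E by auto.
  rewrite Rminus_diag, Rmult_0_l in E. unfold F in E.
  apply Rmult_integral in E. destruct E as [E|E]. lra.
  pose proof (exp_pos (2 * rho * A s)). lra.
Qed.

Lemma part_d n rho g T : RB_diag_solution n rho g T -> (1 <= n)%nat -> Rbar_lt 0 T ->
  (forall i, (1 <= i <= n)%nat -> g i 0 * g (n + i)%nat 0 = g 1%nat 0 * g (1 + n)%nat 0) ->
   INR n + 2 - INR n * rho <> 0 ->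
   let b := (INR n + 2 - INR n * rho) * g (idxN n) 0 / (g 1%nat 0 * g (1 + n)%nat 0) in
   forall t, 0 <= t -> Rbar_lt (Finite t) T -> 0 < 1 + b * t ->
     (forall j, (1 <= j <= 2 * n)%nat ->
        g j t = g j 0 * Rpower (1 + b * t) ((1 - INR n * rho) / (INR n + 2 - INR n * rho))) /\
     g (idxN n) t = g (idxN n) 0
        * Rpower (1 + b * t) ((INR n + INR n * rho) / (INR n * rho - INR n - 2)).
Proof.
  intros Hs Hn H0T H0 HD b t Ht0 HtT Hbt.
  destruct (Req_dec t 0) as [->|Htn0].
  { rewrite Rmult_0_r, Rplus_0_r. unfold Rpower. rewrite ln_1, !Rmult_0_r, exp_0, !Rmult_1_r.
    split; auto. intros; ring. }
  assert (Ht : 0 < t) by lra.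
  set (D := INR n + 2 - INR n * rho) in *.
  set (gN := g (idxN n)).
  set (P1 := fun s => g 1%nat s * g (1 + n)%nat s).
  set (P0 := P1 0).
  assert (HN : (1 <= idxN n <= idxN n)%nat) by (unfold idxN; lia).
  assert (gNp : forall s, 0 <= s -> Rbar_lt s T -> 0 < gN s) by (intros; eapply gpos; eauto).
  assert (P1p : forall s, 0 <= s -> Rbar_lt s T -> 0 < P1 s).
  { intros. unfold P1. apply Rmult_lt_0_compat; eapply gpos; eauto; unfold idxN; lia. }
  assert (HP0 : 0 < P0) by (apply P1p; auto; lra).
  assert (HgN0 : 0 < gN 0) by (apply gNp; auto; lra).
  assert (PE := Peq n rho g T Hs Hn H0T H0).
  assert (SigE : forall s, 0 < s -> Rbar_lt s T -> Sigma n g s = INR n / P1 s).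
  { intros s Hs0 HsT. unfold Sigma.
    rewrite (sum_eq _ (fun _ => / P1 s)).
    rewrite sum_cte. replace (S (n - 1)) with n by lia. unfold Rdiv; ring.
    intros i Hi. unfold P1. rewrite (PE (S i)); auto. lia. }
  assert (Q : forall s, 0 < s -> Rbar_lt s T -> P1 s / gN s = P0 / gN 0 + D * s).
  { intros s Hs0 HsT.
    assert (E : (fun s => P1 s / gN s - D * s) s = (fun s => P1 s / gN s - D * s) 0).
    { apply (const_right (fun s => P1 s / gN s - D * s)); auto.
      - intros x Hx. assert (HxT : Rbar_lt x T) by (eapply lt_T; [|exact HsT]; lra).
        assert (0 < P1 x) by (apply P1p; auto; lra). assert (0 < gN x) by (apply gNp; auto; lra).
        eapply deq. apply minus_deriv. apply is_derive_div.
        apply (P_deriv2 n rho g T 1 x Hs ltac:(lia) ltac:(lra) HxT).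
        apply (der_N n rho g T x Hs Hn ltac:(lra) HxT). lra.
        apply scal_deriv. apply id_deriv.
        cbv beta. rewrite (SigE x ltac:(lra) HxT). fold gN. fold (P1 x).
        unfold D. clearbody P1 gN. field. lra.
      - apply rc_minus. apply rc_mult. unfold P1. apply rc_mult; eapply rc_g; eauto; unfold idxN; lia.
        apply rc_inv. eapply rc_g; eauto. lra.
        apply rc_scal. apply cont_rc. apply (der_cont _ _ 1). apply id_deriv. }
    cbv beta in E. rewrite Rmult_0_r, Rminus_0_r in E. fold P0 in E. lra. }
  set (al := (1 - INR n * rho) / D).
  set (L := ln (1 + b * t)).
  assert (Hb : forall s, 0 <= s <= t -> 0 < 1 + b * s).
  { intros s Hs'. destruct (Rle_dec 0 b). nra.
    assert (b * t <= b * s) by (apply Rmult_le_compat_neg_l; lra). lra. }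
  assert (St3 : forall j, (1 <= j <= 2 * n)%nat -> g j t * exp (- al * L) = g j 0).
  { intros j Hj.
    set (Hf := fun s => g j s * exp (- al * ln (1 + b * s))).
    assert (E : Hf t = Hf 0).
    { apply (const_right Hf); auto.
      - intros x Hx. assert (HxT : Rbar_lt x T) by (eapply lt_T; [|exact HtT]; lra).
        assert (Hbx : 0 < 1 + b * x) by (apply Hb; lra).
        assert (0 < P1 x) by (apply P1p; auto; lra). assert (0 < gN x) by (apply gNp; auto; lra).
        assert (Qx := Q x ltac:(lra) HxT).
        assert (Px : P1 x = gN x * (P0 / gN 0 + D * x)) by (rewrite <- Qx; field; lra).
        assert (0 < P0 / gN 0 + D * x) by (rewrite <- Qx; apply Rdiv_lt_0_compat; lra).
        assert (Hdj : exists k, (1 <= k <= n)%nat /\ is_derive (g j) x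
            (g j x * (gN x / (g k x * g (k+n)%nat x) - rho * (gN x * Sigma n g x)))).
        { destruct (Nat.le_gt_cases j n).
          - exists j. split. lia. apply (der_low n rho g T j x Hs ltac:(lia) ltac:(lra) HxT).
          - exists (j - n)%nat. split. lia.
            replace j with ((j - n) + n)%nat at 1 2 by lia.
            apply (der_high n rho g T (j - n) x Hs ltac:(lia) ltac:(lra) HxT). }
        destruct Hdj as [k [Hk Hd]].
        eapply deq. unfold Hf. apply mul_deriv. exact Hd.
        apply exp_deriv. apply scal_deriv. apply ln_deriv. auto.
        apply plus_deriv. apply const_deriv. apply scal_deriv. apply id_deriv.
        cbv beta. rewrite (PE k x Hk ltac:(lra) HxT). fold (P1 x).
        rewrite (SigE x ltac:(lra) HxT). rewrite Px.
        unfold al. assert (Hbd : b = D * gN 0 / P0) by reflexivity. rewrite Hbd in *.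
        set (e := exp _). clearbody e P1 gN P0 D.
        assert (F1 : 0 < P0 + D * gN 0 * x).
        { replace (P0 + D * gN 0 * x) with (gN 0 * (P0 / gN 0 + D * x)) by (field; lra).
          apply Rmult_lt_0_compat; lra. }
        field. repeat match goal with |- _ /\ _ => split end; try lra.
      - unfold Hf. apply rc_mult. eapply rc_g; eauto. unfold idxN; lia.
        apply cont_rc. apply (@ex_derive_continuous R_AbsRing R_NormedModule). auto_derive. lra. }
    unfold Hf in E. rewrite Rmult_0_r, Rplus_0_r, ln_1, Rmult_0_r, exp_0, Rmult_1_r in E.
    exact E. }
  assert (St3' : forall j, (1 <= j <= 2 * n)%nat -> g j t = g j 0 * exp (al * L)).
  { intros j Hj. rewrite <- (St3 j Hj). rewrite Rmult_assoc, <- exp_plus.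
    replace (- al * L + al * L) with 0 by ring. rewrite exp_0. ring. }
  split.
  - intros j Hj. rewrite St3' by auto. reflexivity.
  - assert (Qt := Q t Ht HtT).
    assert (0 < gN t) by (apply gNp; auto; lra).
    assert (0 < P1 t) by (apply P1p; auto; lra).
    assert (HX : 0 < P0 / gN 0 + D * t) by (rewrite <- Qt; apply Rdiv_lt_0_compat; lra).
    assert (EgN : gN t = P1 t / (P0 / gN 0 + D * t)) by (rewrite <- Qt; field; lra).
    assert (EP : P1 t = P0 * (exp (al * L) * exp (al * L))).
    { unfold P1 at 1. rewrite (St3' 1%nat) by lia. rewrite (St3' (1 + n)%nat) by lia. unfold P0, P1. ring. }
    fold gN. rewrite EgN, EP. unfold Rpower. fold L.
    assert (EL : exp L = 1 + b * t) by (apply exp_ln; auto).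
    replace ((INR n + INR n * rho) / (INR n * rho - INR n - 2) * L) with (al * L + (al * L + - L)).
    2:{ unfold al, D in *. field. split; lra. }
    rewrite !exp_plus, exp_Ropp, EL.
    assert (Hbd : b = D * gN 0 / P0) by reflexivity. rewrite Hbd in *.
    set (e := exp (al * L)). clearbody e P1 gN P0 D.
    assert (F1 : 0 < P0 + D * gN 0 * t).
    { replace (P0 + D * gN 0 * t) with (gN 0 * (P0 / gN 0 + D * t)) by (field; lra).
      apply Rmult_lt_0_compat; lra. }
    field. repeat match goal with |- _ /\ _ => split end; try lra.
Qed.

Theorem theorem2p4 (n : nat) (rho : R) (g : nat -> R -> R) (T : Rbar) :
  (1 <= n)%nat ->
  Rbar_lt (Finite 0) T ->
  RB_diag_solution n rho g T ->
  (* (a) *)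
  (forall i t, (1 <= i <= n)%nat -> 0 < t -> Rbar_lt (Finite t) T ->
     is_derive (fun s => g i s / g (i + n)%nat s) t 0) /\
  (* (b) (the exponent requires 1 + rho <> 0) *)
  (1 + rho <> 0 ->
   forall t, 0 < t -> Rbar_lt (Finite t) T ->
     is_derive (fun s => prod_f_R0 (fun k => g (S k) s) (n - 1)
                         * Rpower (g (idxN n) s) ((1 - INR n * rho) / (1 + rho))) t 0 /\
     is_derive (fun s => prod_f_R0 (fun k => g (S k + n)%nat s) (n - 1)
                         * Rpower (g (idxN n) s) ((1 - INR n * rho) / (1 + rho))) t 0) /\
  (* (c) *)
  (rho < 0 -> T = p_infty ->
     is_lim (fun t => RInt (g (idxN n)) 0 t) p_infty p_infty) /\
  (* (d) *)
  ((forall i, (1 <= i <= n)%nat -> g i 0 * g (n + i)%nat 0 = g 1%nat 0 * g (1 + n)%nat 0) ->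
   INR n + 2 - INR n * rho <> 0 ->
   let b := (INR n + 2 - INR n * rho) * g (idxN n) 0 / (g 1%nat 0 * g (1 + n)%nat 0) in
   forall t, 0 <= t -> Rbar_lt (Finite t) T -> 0 < 1 + b * t ->
     (forall j, (1 <= j <= 2 * n)%nat ->
        g j t = g j 0 * Rpower (1 + b * t) ((1 - INR n * rho) / (INR n + 2 - INR n * rho))) /\
     g (idxN n) t = g (idxN n) 0
        * Rpower (1 + b * t) ((INR n + INR n * rho) / (INR n * rho - INR n - 2))).
Proof.
  intros Hn H0T Hs.
  split; [|split; [|split]].
  - intros i t Hi Ht HT. eapply part_a; eauto.
  - intros Hr t Ht HT. split.
    + apply (part_b_gen n rho g T t (fun s => prod_f_R0 (fun k => g (S k) s) (n - 1))); auto.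
      apply (Pi1_deriv n rho g T t); auto.
    + apply (part_b_gen n rho g T t (fun s => prod_f_R0 (fun k => g (S k + n)%nat s) (n - 1))); auto.
      apply (Pi2_deriv n rho g T t); auto.
  - intros Hr HT. subst T. apply part_c with (rho := rho); auto.
  - intros H0 HD. apply part_d; auto.
Qed.
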